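(* Let $n\ge1$, $r\ge1$ and $1\le k\le n$. Then $\kappa\,\mathcal{S}_{r-1}\Lambda^k(\mathbb{R}^n)\subset\mathcal{S}_r\Lambda^{k-1}(\mathbb{R}^n)$.
   Context: For a multi-index $\alpha\in\mathbb{N}^n$ and $\sigma=\{\sigma(1)<\dots<\sigma(k)\}\subset\{1,\dots,n\}$, the form monomial is $x^\alpha dx_\sigma:=x_1^{\alpha_1}\cdots x_n^{\alpha_n}\,dx_{\sigma(1)}\wedge\cdots\wedge dx_{\sigma(k)}$, of degree $|\alpha|$. $\mathcal{H}_r\Lambda^k(\mathbb{R}^n)$ is the span of form monomials with $|\alpha|=r$, $|\sigma|=k$ ($0$ if $r<0$ or $k\notin\{0,\dots,n\}$), and $\mathcal{P}_r\Lambda^k:=\bigoplus_{j=0}^r\mathcal{H}_j\Lambda^k$. $d$ is the exterior derivative. The Koszul operator is $\kappa(x^\alpha dx_\sigma)=\sum_{i=1}^k(-1)^{i+1}x^\alpha x_{\sigma(i)}\,dx_{\sigma(1)}\wedge\cdots\wedge\widehat{dx_{\sigma(i)}}\wedge\cdots\wedge dx_{\sigma(k)}$, extended linearly. The linear degree is $\mathrm{ldeg}(x^\alpha dx_\sigma):=\#\{i\notin\sigma:\alpha_i=1\}$; $\mathcal{H}_{r,l}\Lambda^k$ is the span of form monomials in $\mathcal{H}_r\Lambda^k$ with linear degree $\ge l$; $\mathcal{J}_r\Lambda^k:=\sum_{l\ge1}\kappa\,\mathcal{H}_{r+l-1,l}\Lambda^{k+1}$; and the serendipity space is $\mathcal{S}_r\Lambda^k:=\mathcal{P}_r\Lambda^k+\mathcal{J}_r\Lambda^k+d\,\mathcal{J}_{r+1}\Lambda^{k-1}$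 (forms of degree $-1$ or $n+1$ are $0$), all on $\mathbb{R}^n$. *)

(* Defs.v *)
(* Polynomial differential forms on R^n, represented as
   finite formal sums (lists) of coefficient * pform monomial x^alpha dx_sigma. *)
From HB Require Import structures.
From mathcomp Require Import all_boot all_order all_algebra.
Set Implicit Arguments. Unset Strict Implicit. Unset Printing Implicit Defensive.
Import Order.TTheory GRing.Theory Num.Theory.
Local Open Scope ring_scope.

Section Forms.
Variables (R : realFieldType) (n : nat).

(* A pform monomial x^alpha dx_sigma: multi-index alpha and increasing index
   set sigma (a finite set of 'I_n, listed increasingly). *)
Definition mono := ({ffun 'I_n -> nat} * {set 'I_n})%type.

Definition pform := seq (R * mono).

(* Coefficient of a monomial in a formal sum; two formal sums denote the
   same pform iff all coefficients agree. *)
Definition coef (w : pform) (m : mono) : R := \sum_(t <- w | t.2 == m) t.1.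
Definition feq (w1 w2 : pform) : Prop := forall m, coef w1 m = coef w2 m.

Definition mdeg (a : {ffun 'I_n -> nat}) : nat := (\sum_(i < n) a i)%N.
Definition addE (a : {ffun 'I_n -> nat}) (i : 'I_n) : {ffun 'I_n -> nat} :=
  [ffun j => (a j + (j == i))%N].
Definition subE (a : {ffun 'I_n -> nat}) (i : 'I_n) : {ffun 'I_n -> nat} :=
  [ffun j => (a j - (j == i))%N].

Definition ldeg (m : mono) : nat := #|[set i | (i \notin m.2) && (m.1 i == 1%N)]|.

(* sign (-1)^{#{m in s | m < i}} : position of dx_i among dx_s *)
Definition sgn (s : {set 'I_n}) (i : 'I_n) : R := (-1) ^+ #|[set j in s | (j < i)%N]|.

(* Koszul operator on a monomial:
   kappa(x^a dx_s) = sum_{p} (-1)^{p+1} x^a x_{s(p)} dx_{s \ s(p)}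
   (if i = s(p) then p = 1 + #{j in s | j < i}, so (-1)^{p+1} = sgn s i). *)
Definition kappa_mono (t : R * mono) : pform :=
  [seq (sgn t.2.2 i * t.1, (addE t.2.1 i, t.2.2 :\ i)) | i <- enum t.2.2].
Definition kappa (w : pform) : pform := flatten (map kappa_mono w).

(* Exterior derivative on a monomial:
   d(x^a dx_s) = sum_i a_i x^{a - e_i} dx_i /\ dx_s, with
   dx_i /\ dx_s = 0 if i in s, and = sgn s i * dx_{s U {i}} otherwise. *)
Definition d_mono (t : R * mono) : pform :=
  [seq (sgn t.2.2 i * (t.2.1 i)%:R * t.1, (subE t.2.1 i, i |: t.2.2))
  | i <- enum (~: t.2.2)].
Definition dext (w : pform) : pform := flatten (map d_mono w).

Definition inP (r k : nat) (w : pform) : Prop :=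
  forall m, coef w m != 0 -> (mdeg m.1 <= r)%N /\ #|m.2| = k.
Definition inHl (r l k : nat) (w : pform) : Prop :=
  forall m, coef w m != 0 -> mdeg m.1 = r /\ #|m.2| = k /\ (l <= ldeg m)%N.
(* w in J_r Lambda^k = sum_{l >= 1} kappa H_{r+l-1,l} Lambda^{k+1}
   (finite sums of elements of these subspaces) *)
Definition inJ (r k : nat) (w : pform) : Prop :=
  exists s : seq (nat * pform),
    (forall p, p \in s -> (1 <= p.1)%N /\ inHl (r + p.1 - 1) p.1 k.+1 p.2) /\
    feq w (flatten [seq kappa p.2 | p <- s]).
(* w in d J_{r+1} Lambda^{k-1}  (= 0 when k = 0, forms of degree -1 being 0) *)
Definition inDJ (r k : nat) (w : pform) : Prop :=
  match k with
  | 0 => feq w [::]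
  | k'.+1 => exists u, inJ r.+1 k' u /\ feq w (dext u)
  end.
Definition inS (r k : nat) (w : pform) : Prop :=
  exists a b c, inP r k a /\ inJ r k b /\ inDJ r k c /\ feq w (a ++ b ++ c).

End Forms.

(* Main.v *)
Require Import Defs.
From HB Require Import structures.
From mathcomp Require Import all_boot all_order all_algebra.
From mathcomp Require Import ring lra zify.
Import Order.TTheory GRing.Theory Num.Theory.
Local Open Scope ring_scope.

Set Implicit Arguments. Unset Strict Implicit. Unset Printing Implicit Defensive.

Section Gen.
Variables (R : realFieldType) (n : nat).
Local Notation pf := (pform R n).
Local Notation mono := (mono n).

Definition liftF (F : R * mono -> pf) (w : pf) : pf := flatten (map F w).
Definition scl (c : R) (t : R * mono) : R * mono := (t.1 * c, t.2).
Definition sscal (F : R * mono -> pf) :=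
  forall c x m, F (x * c, m) = map (scl c) (F (x, m)).

Lemma coef_nil m : coef ([::] : pf) m = 0.
Proof. by rewrite /coef big_nil. Qed.

Lemma coef_cat (w1 w2 : pf) m : coef (w1 ++ w2) m = coef w1 m + coef w2 m.
Proof. by rewrite /coef big_cat. Qed.

Lemma coef_flatten (L : seq pf) m : coef (flatten L) m = \sum_(w <- L) coef w m.
Proof.
elim: L => [|w L IH]; first by rewrite big_nil coef_nil.
by rewrite /= coef_cat IH big_cons.
Qed.

Lemma coef_liftF F (w : pf) m : coef (liftF F w) m = \sum_(t <- w) coef (F t) m.
Proof. by rewrite /liftF coef_flatten big_map. Qed.

Lemma coef_scl c (w : pf) m : coef (map (scl c) w) m = coef w m * c.
Proof. by rewrite /coef big_map mulr_suml. Qed.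

Lemma sscal_coef F c m' m : sscal F -> coef (F (c, m')) m = c * coef (F (1, m')) m.
Proof. by move=> H; rewrite -{1}[c]mul1r H coef_scl mulrC. Qed.

Lemma liftF_cat F (w1 w2 : pf) : liftF F (w1 ++ w2) = liftF F w1 ++ liftF F w2.
Proof. by rewrite /liftF map_cat flatten_cat. Qed.

Lemma liftF_flatten F (L : seq pf) : liftF F (flatten L) = flatten (map (liftF F) L).
Proof. by elim: L => [|w L IH] //=; rewrite liftF_cat IH. Qed.

Lemma liftF_liftF F G (w : pf) : liftF F (liftF G w) = liftF (fun t => liftF F (G t)) w.
Proof. elim: w => [|t w IH] //. by rewrite /= liftF_cat IH. Qed.

Lemma liftF_scl F c (w : pf) : sscal F -> liftF F (map (scl c) w) = map (scl c) (liftF F w).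
Proof.
move=> H; elim: w => [|[x m] w IH] //=.
by rewrite /liftF /= -/(liftF F _) IH H map_cat.
Qed.

Lemma sscal_comp F G : sscal F -> sscal G -> sscal (fun t => liftF F (G t)).
Proof. by move=> HF HG c x m /=; rewrite HG liftF_scl. Qed.

Lemma sum_supp (w : pf) (S : seq mono) (f : mono -> R) :
  uniq S -> {subset map snd w <= S} ->
  \sum_(t <- w) t.1 * f t.2 = \sum_(m' <- S) coef w m' * f m'.
Proof.
move=> uS sub.
transitivity (\sum_(t <- w) \sum_(m' <- S | t.2 == m') t.1 * f m').
  apply: eq_big_seq => t tw.
  rewrite -big_filter.
  have -> : [seq m' <- S | t.2 == m'] = [:: t.2].
    rewrite -(filter_pred1_uniq uS (sub _ (map_f snd tw))).
    by apply: eq_filter => y /=; rewrite eq_sym.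
  by rewrite big_seq1.
rewrite (exchange_big_dep xpredT) //=.
apply: eq_bigr => m' _; rewrite /coef mulr_suml.
by [].
Qed.

Lemma coef_liftF_supp F (w : pf) (S : seq mono) m :
  sscal F -> uniq S -> {subset map snd w <= S} ->
  coef (liftF F w) m = \sum_(m' <- S) coef w m' * coef (F (1, m')) m.
Proof.
move=> H uS sub; rewrite coef_liftF -(sum_supp _ uS sub).
by apply: eq_bigr => [[x m']] _; rewrite sscal_coef.
Qed.

Lemma liftF_feq F (w1 w2 : pf) : sscal F -> feq w1 w2 -> feq (liftF F w1) (liftF F w2).
Proof.
move=> H e m.
set S := undup (map snd (w1 ++ w2)).
have uS : uniq S by apply: undup_uniq.
rewrite (coef_liftF_supp _ H uS) ?(coef_liftF_supp _ H uS).
- by apply: eq_bigr => m' _; rewrite e.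
- by move=> x xw; rewrite mem_undup map_cat mem_cat xw orbT.
- by move=> x xw; rewrite mem_undup map_cat mem_cat xw.
Qed.

Lemma sscal_kappa : sscal (@kappa_mono R n).
Proof.
move=> c x [a s]; rewrite /kappa_mono -map_comp; apply: eq_map => i /=.
by rewrite /scl /= mulrA.
Qed.

Lemma sscal_d : sscal (@d_mono R n).
Proof.
move=> c x [a s]; rewrite /d_mono -map_comp; apply: eq_map => i /=.
by rewrite /scl /= !mulrA.
Qed.

End Gen.

Section Sgn.
Variables (R : realFieldType) (n : nat).

Definition cnt (s : {set 'I_n}) (i : 'I_n) : nat := #|[set j in s | (j < i)%N]|.

Lemma cntD1 (X : {set 'I_n}) (x y : 'I_n) : cnt X y = (((x \in X) && (x < y)%N) + cnt (X :\ x) y)%N.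
Proof.
rewrite /cnt (cardsD1 x [set z in X | (z < y)%N]) inE; congr (_ + _)%N; apply: eq_card => z.
by rewrite !inE andbA.
Qed.

Lemma cntU1 (X : {set 'I_n}) (x y : 'I_n) : x \notin X -> cnt (x |: X) y = ((x < y)%N + cnt X y)%N.
Proof. by move=> xX; rewrite (cntD1 _ x) setU11 (setU1K xX). Qed.

Lemma sgnE (s : {set 'I_n}) (i : 'I_n) : sgn R s i = (-1) ^+ cnt s i.
Proof. by []. Qed.

Lemma sign_sq (c : nat) : ((-1) ^+ c * (-1) ^+ c : R) = 1.
Proof. by rewrite -exprD -signr_odd oddD addbb expr0. Qed.

Lemma sgn1 (s : {set 'I_n}) (i j : 'I_n) : i \in s -> j \in s -> i != j ->
  sgn R (s :\ i) j * sgn R s i = - (sgn R (s :\ j) i * sgn R s j).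
Proof.
move=> iS jS nij; rewrite !sgnE (cntD1 s i j) (cntD1 s j i) iS jS /=.
case: ltngtP => [_|_|/val_inj ij] /=; rewrite ?add0n ?add1n ?exprS; [ring|ring|by rewrite ij eqxx in nij].
Qed.

Lemma sgn2 (s : {set 'I_n}) (i j : 'I_n) : i \in s -> j \notin s ->
  sgn R (j |: s) i * sgn R s j = - (sgn R (s :\ i) j * sgn R s i).
Proof.
move=> iS jS; have nij : i != j by apply: contraNneq jS => <-.
rewrite !sgnE (cntU1 i jS) (cntD1 s i j) iS /=.
case: ltngtP => [_|_|/val_inj ij] /=; rewrite ?add0n ?add1n ?exprS; [ring|ring|by rewrite ij eqxx in nij].
Qed.

Lemma sgn3 (s : {set 'I_n}) (i : 'I_n) : i \in s -> sgn R (s :\ i) i * sgn R s i = 1.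
Proof. by move=> iS; rewrite !sgnE (cntD1 s i i) ltnn andbF add0n sign_sq. Qed.

Lemma sgn4 (s : {set 'I_n}) (j : 'I_n) : j \notin s -> sgn R (j |: s) j * sgn R s j = 1.
Proof. by move=> jS; rewrite !sgnE (cntU1 j jS) ltnn add0n sign_sq. Qed.

End Sgn.

Section Comb.
Variables (R : realFieldType) (n : nat).
Local Notation pf := (pform R n).
Local Notation mono := (mono n).

Lemma coef_map_enum (A : {set 'I_n}) (f : 'I_n -> R) (g : 'I_n -> mono) m :
  coef [seq (f i, g i) | i <- enum A] m = \sum_(i in A | g i == m) f i.
Proof. by rewrite /coef big_map big_enum_cond. Qed.

Lemma addEC (a : {ffun 'I_n -> nat}) i j : addE (addE a i) j = addE (addE a j) i.
Proof. by apply/ffunP => k; rewrite !ffunE addnAC. Qed.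

Lemma setD1C (s : {set 'I_n}) i j : s :\ i :\ j = s :\ j :\ i.
Proof. by apply/setP => k; rewrite !inE andbCA. Qed.

Lemma kk_zero (t : R * mono) m : coef (liftF (@kappa_mono R n) (kappa_mono t)) m = 0.
Proof.
case: t => c [a s].
rewrite coef_liftF /kappa_mono /= big_map big_enum /=.
set F := fun i j : 'I_n =>
  if [&& i \in s, j \in s :\ i & (addE (addE a i) j, s :\ i :\ j) == m]
  then sgn R (s :\ i) j * (sgn R s i * c) else 0.
transitivity (\sum_i \sum_j F i j).
  rewrite big_mkcond; apply: eq_bigr => i _.
  case iS: (i \in s); last by rewrite big1 // => j _; rewrite /F iS.
  rewrite coef_map_enum big_mkcond; apply: eq_bigr => j _ /=.
  by rewrite /F iS /=.
have anti : forall i j, F j i = - F i j.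
  move=> i j; rewrite /F addEC setD1C !inE.
  case: (eqVneq i j) => [->|nij]; first by rewrite /= ?eqxx ?andbF /= oppr0.
  rewrite /=.
  case iS: (i \in s); case jS: (j \in s) => /=; rewrite ?oppr0 //.
  case: ifP => _; last by rewrite oppr0.
  by rewrite !mulrA (sgn1 R jS iS) ?mulNr // eq_sym.
set S := \sum_i _.
have : S = - S.
  rewrite {1}/S exchange_big /= -sumrN; apply: eq_bigr => i _.
  rewrite -sumrN; apply: eq_bigr => j _; by rewrite anti.
move=> h; lra.
Qed.


Lemma subE_addE (a : {ffun 'I_n -> nat}) (i j : 'I_n) : i != j ->
  addE (subE a j) i = subE (addE a i) j.
Proof.
move=> nij; apply/ffunP => k; rewrite !ffunE.
case: (eqVneq k i) => [->|ki] /=; first by rewrite (negbTE nij) /= !subn0.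
by rewrite !addn0.
Qed.

Lemma addE_subE_same (a : {ffun 'I_n -> nat}) (i : 'I_n) : (0 < a i)%N ->
  addE (subE a i) i = a.
Proof.
move=> ai; apply/ffunP => k; rewrite !ffunE.
case: (eqVneq k i) => [->|ki] /=; first by rewrite subnK.
by rewrite subn0 addn0.
Qed.

Lemma subE_addE_same (a : {ffun 'I_n -> nat}) (i : 'I_n) : subE (addE a i) i = a.
Proof. by apply/ffunP => k; rewrite !ffunE addnK. Qed.

Lemma setU1D1 (s : {set 'I_n}) (i j : 'I_n) : i != j -> (j |: s) :\ i = j |: (s :\ i).
Proof.
move=> nij; apply/setP => k; rewrite !inE.
case: (eqVneq k j) => [->|kj] /=; last by [].
by rewrite andbT eq_sym.
Qed.

Lemma homotopy (a : {ffun 'I_n -> nat}) (s : {set 'I_n}) m :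
  coef (liftF (@kappa_mono R n) (d_mono (1, (a, s)))) m
  + coef (liftF (@d_mono R n) (kappa_mono (1, (a, s)))) m
  = (mdeg a + #|s|)%:R * ((a, s) == m)%:R.
Proof.
rewrite !coef_liftF /d_mono /kappa_mono /= !big_map !big_enum /=.
set F1 := fun i j : 'I_n =>
  if [&& j \in ~: s, i \in j |: s & (addE (subE a j) i, (j |: s) :\ i) == m]
  then sgn R (j |: s) i * (sgn R s j * (a j)%:R * 1) else 0.
set F2 := fun i j : 'I_n =>
  if [&& i \in s, j \in ~: (s :\ i) & (subE (addE a i) j, j |: (s :\ i)) == m]
  then sgn R (s :\ i) j * ((addE a i) j)%:R * (sgn R s i * 1) else 0.
have E1 : \sum_(j in ~: s) coef [seq (sgn R (j |: s) i * (sgn R s j * (a j)%:R * 1),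
      (addE (subE a j) i, (j |: s) :\ i)) | i <- enum (j |: s)] m
    = \sum_i \sum_j F1 i j.
  rewrite exchange_big big_mkcond; apply: eq_bigr => j _.
  case jS: (j \in ~: s); last by rewrite big1 // => i _; rewrite /F1 jS.
  rewrite coef_map_enum big_mkcond; apply: eq_bigr => i _ /=.
  by rewrite /F1 jS /=.
have E2 : \sum_(i in s) coef [seq (sgn R (s :\ i) j * ((addE a i) j)%:R * (sgn R s i * 1),
      (subE (addE a i) j, j |: (s :\ i))) | j <- enum (~: (s :\ i))] m
    = \sum_i \sum_j F2 i j.
  rewrite big_mkcond; apply: eq_bigr => i _.
  case iS: (i \in s); last by rewrite big1 // => j _; rewrite /F2 iS.
  rewrite coef_map_enum big_mkcond; apply: eq_bigr => j _ /=.
  by rewrite /F2 iS /=.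
rewrite E1 E2 -big_split /=.
set e := ((a, s) == m)%:R.
transitivity (\sum_i e * ((a i)%:R + (i \in s)%:R)).
  apply: eq_bigr => i _; rewrite -big_split /= (bigD1 i) //= big1 ?addr0.
    rewrite /F1 /F2 !inE eqxx /=.
    case iS: (i \in s) => /=.
      rewrite subE_addE_same (setD1K iS) ffunE eqxx /= add0r mulr1 mulrAC.
      rewrite (sgn3 R iS) mul1r /e natrD.
      by case: (_ == m); rewrite ?mul1r ?mul0r.
    rewrite addr0 addr0.
    case: (posnP (a i)) => [a0|apos].
      by rewrite a0 !mulr0 !mul0r; case: ifP; rewrite ?mulr0.
    rewrite (addE_subE_same apos) (setU1K (negbT iS)) mulr1 mulrA.
    rewrite (sgn4 R (negbT iS)) mul1r /e.
    by case: (_ == m); rewrite ?mul1r ?mul0r.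
  move=> j nji; rewrite /F1 /F2 !inE.
  have nij : i != j by rewrite eq_sym.
  rewrite (negbTE nij) nji /= (subE_addE _ nij) (setU1D1 _ nij) ffunE (negbTE nji) addn0.
  case iS: (i \in s); case jS: (j \in s) => /=; rewrite ?addr0 ?add0r //.
  case: ifP => _; last by rewrite addr0.
  rewrite !mulr1 !mulrA (sgn2 R iS (negbT jS)); ring.
rewrite -mulr_sumr mulrC big_split /= natrD /mdeg natr_sum.
congr ((_ + _) * _).
rewrite -sum1_card natr_sum [RHS]big_mkcond; apply: eq_bigr => i _.
by case: (i \in s).
Qed.

End Comb.

Section Main.
Variables (R : realFieldType) (n : nat).
Local Notation pf := (pform R n).
Local Notation mono := (mono n).

Lemma kappaE (w : pf) : kappa w = liftF (@kappa_mono R n) w.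
Proof. by []. Qed.
Lemma dextE (w : pf) : dext w = liftF (@d_mono R n) w.
Proof. by []. Qed.

Lemma kk_feq0 (x : pf) : feq (liftF (@kappa_mono R n) (liftF (@kappa_mono R n) x)) [::].
Proof.
move=> m; rewrite liftF_liftF coef_liftF coef_nil big1 // => t _; exact: kk_zero.
Qed.

Lemma mdeg_addE (a : {ffun 'I_n -> nat}) i : mdeg (addE a i) = (mdeg a + 1)%N.
Proof.
rewrite /mdeg (eq_bigr (fun k => a k + (k == i))%N); last by move=> k _; rewrite ffunE.
rewrite big_split /=; congr (_ + _)%N.
rewrite (bigD1 i) //= eqxx big1 ?addn0 // => k /negbTE ->.
by [].
Qed.

Lemma kdk (h : pf) (D K : nat) :
  (forall m', coef h m' != 0 -> mdeg m'.1 = D /\ #|m'.2| = K) ->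
  forall m, coef (kappa (dext (kappa h))) m = coef (kappa h) m * (D + K)%:R.
Proof.
move=> H m; rewrite !kappaE dextE !liftF_liftF.
set S := undup (map snd h).
have uS : uniq S by apply: undup_uniq.
have sub : {subset map snd h <= S} by move=> x; rewrite mem_undup.
have sc3 := sscal_comp (sscal_comp (@sscal_kappa R n) (@sscal_d R n)) (@sscal_kappa R n).
rewrite (coef_liftF_supp m sc3 uS sub) (coef_liftF_supp m (@sscal_kappa R n) uS sub).
rewrite mulr_suml; apply: eq_bigr => [[a s]] _.
case: (eqVneq (coef h (a, s)) 0) => [->|nz]; first by rewrite !mul0r.
rewrite -mulrA; congr (_ * _).
have [Da Ks] := H _ nz; rewrite /= in Da Ks.
rewrite coef_liftF.
set L := kappa_mono (1, (a, s)).
have sc2 := sscal_comp (@sscal_kappa R n) (@sscal_d R n).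
have sc2' := sscal_comp (@sscal_d R n) (@sscal_kappa R n).
transitivity (\sum_(t <- L) (t.1 * ((D + K)%:R * (t.2 == m)%:R)
                           - coef (liftF (@d_mono R n) (kappa_mono t)) m)).
  apply: eq_big_seq => [[x [a' s']]] tL.
  rewrite (sscal_coef (F := fun t => liftF (@kappa_mono R n) (d_mono t))) //.
  rewrite (sscal_coef (F := fun t => liftF (@d_mono R n) (kappa_mono t))) //=.
  have hm := homotopy R a' s' m.
  have deg : (mdeg a' + #|s'| = D + K)%N.
    move: tL; rewrite /L /kappa_mono /= => /mapP [i]; rewrite mem_enum => iS [_ -> ->].
    by rewrite mdeg_addE Da -Ks (cardsD1 i s) iS /= addnA.
  rewrite deg in hm.
  have -> : ((a', s') == m)%:R = ((a', s') == m)%:R :> R by [].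
  rewrite -hm; ring.
rewrite sumrB.
have -> : \sum_(t <- L) coef (liftF (@d_mono R n) (kappa_mono t)) m = 0.
  rewrite -coef_liftF -liftF_liftF.
  rewrite (liftF_feq (@sscal_d R n) (w2 := [::])) ?coef_nil //.
  by move=> m'; rewrite /L coef_nil kk_zero.
rewrite subr0 /coef mulr_suml [RHS]big_mkcond; apply: eq_bigr => t _.
by case: (t.2 == m); rewrite /= ?mulr1 ?mulr0 ?mul0r // mulrC.
Qed.

End Main.

Unset Implicit Arguments.
Set Strict Implicit.

Theorem mainTheorem13 (R : realFieldType) (n r k : nat) :
  (1 <= n)%N -> (1 <= r)%N -> (1 <= k <= n)%N ->
  forall w : pform R n, inS (r - 1) k w -> inS r (k - 1) (kappa w).
Proof.
move=> n1 r1 /andP[k1 kn] w [a [b [c [Pa [[sb [Hsb eb]] [DJc e]]]]]].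
case: k k1 kn Pa Hsb eb DJc e => [//|k'] _ _ Pa Hsb eb DJc e.
have -> : (k'.+1 - 1 = k')%N by rewrite subn1.
have rr : (r - 1).+1 = r by lia.
move: DJc => /= [u [[sc [Hsc ec]] eu]].
rewrite rr in Hsc.
set N := fun p : nat * pform R n => (((r + p.1 - 1) + k'.+1)%N%:R : R).
set s' := [seq (p.1, map (scl (N p)) p.2) | p <- sc].
exists (kappa a), (flatten [seq kappa p.2 | p <- s']), [::].
split; [|split; [|split]].
- move=> m nz.
  have sub : {subset map snd a <= undup (map snd a)} by move=> x; rewrite mem_undup.
  rewrite kappaE (coef_liftF_supp m (@sscal_kappa R n) (undup_uniq _) sub) in nz.
  case: (boolP (has (fun m' => coef a m' * coef (kappa_mono (1, m')) m != 0)
                   (undup (map snd a)))) => [/hasP [[a' s'0] _ nz'] | /hasPn H]; last first.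
    by move: nz; rewrite big_seq big1 ?eqxx // => m' /H /negPn/eqP.
  move: nz'; rewrite mulf_eq0 negb_or => /andP[/Pa [/= dega carda] nzk].
  rewrite /kappa_mono /= coef_map_enum in nzk.
  case: (pickP (fun i => (i \in s'0) && ((addE a' i, s'0 :\ i) == m))) => [i /andP[iS /eqP <-] | none].
    rewrite mdeg_addE /=; split; first lia.
    by move: carda; rewrite (cardsD1 i s'0) iS => [[]].
  by rewrite big_pred0 ?eqxx in nzk.
- exists s'; split => // p /mapP [q qsc ->] /=.
  have [q1 Hq] := Hsc q qsc; split => // m.
  by rewrite coef_scl mulf_eq0 negb_or => /andP[/Hq].
- case: k' {Pa Hsb eb Hsc N s' e} => [|k''] /=; first by [].
  exists [::]; split; last by [].
  by exists [::]; split => // p; rewrite in_nil.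
- move=> m.
  have sk := @sscal_kappa R n; have sd := @sscal_d R n.
  rewrite kappaE (liftF_feq sk e m) !liftF_cat !coef_cat coef_nil addr0.
  have -> : coef (liftF (@kappa_mono R n) b) m = 0.
    rewrite (liftF_feq sk eb m) liftF_flatten coef_flatten !big_map big1 // => p _.
    by have := kk_feq0 p.2 m; rewrite coef_nil; apply.
  rewrite (liftF_feq sk eu m) dextE (liftF_feq sk (liftF_feq sd ec) m).
  rewrite !liftF_flatten !coef_flatten !big_map /= add0r; congr (_ + _).
  apply: eq_big_seq => p psc.
  rewrite !kappaE liftF_scl // coef_scl.
  have [q1 Hq] := Hsc p psc.
  have := @kdk R n p.2 (r + p.1 - 1) k'.+1.
  rewrite !kappaE dextE => ->; first by [].
  by move=> m' /Hq [-> [-> _]].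
Qed.
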